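(* Let $G$ be a finite simple graph that contains no induced subgraph isomorphic to a banner or to $C_5$. Suppose $G$ contains an odd antihole $A$ (as an induced subgraph) such that (i) $\alpha(G) \geq 3$, and (ii) no co-triangle of $G$ contains two vertices of $A$. Then the complement $\overline{G}$ of $G$ has a connected component $O$ that contains all vertices of $A$ and is triangle-free.
   Context: A hole is a chordless (induced) cycle with at least four vertices; it is odd if it has an odd number of vertices. An antihole is the complement of a hole; an odd antihole is the complement of an odd hole. $C_k$ denotes the chordless cycle on $k$ vertices. A banner is the graph consisting of a hole on four vertices together with one additional vertex adjacent to exactly one vertex of that hole. A co-triangle is a set of three pairwise non-adjacent vertices (the complement of a triangle). $\alpha(G)$ denotes the maximum size of a stable set of $G$. ''Contains'' means contains as an induced subgraph. *)

(* Defs.v *)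
From mathcomp Require Import all_boot.
Set Implicit Arguments. Unset Strict Implicit. Unset Printing Implicit Defensive.

Definition simple_graph (T : finType) (adj : rel T) : Prop :=
  symmetric adj /\ irreflexive adj.

Definition compl_adj (T : finType) (adj : rel T) : rel T :=
  fun x y => (x != y) && ~~ adj x y.

Definition induced_copy (P T : finType) (e : rel P) (adj : rel T) (f : P -> T) : Prop :=
  injective f /\ forall u v, adj (f u) (f v) = e u v.

Definition contains (P T : finType) (e : rel P) (adj : rel T) : Prop :=
  exists f : P -> T, induced_copy e adj f.

Definition cycle_adj (k : nat) : rel 'I_k :=
  fun i j => (j == (i.+1 %% k) :> nat) || (i == (j.+1 %% k) :> nat).

Arguments cycle_adj k : clear implicits.

(* Banner: 4-hole 0-1-2-3-0 plus vertex 4 adjacent only to 0. *)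
Definition banner_adj : rel 'I_5 :=
  fun i j =>
    let a := nat_of_ord i in let b := nat_of_ord j in
    [|| (a == 0) && (b == 1), (a == 1) && (b == 0),
        (a == 1) && (b == 2), (a == 2) && (b == 1),
        (a == 2) && (b == 3), (a == 3) && (b == 2),
        (a == 3) && (b == 0), (a == 0) && (b == 3),
        (a == 0) && (b == 4) | (a == 4) && (b == 0)].

Definition odd_antihole (T : finType) (adj : rel T) (A : {set T}) : Prop :=
  exists k, exists f : 'I_k -> T,
    [/\ 5 <= k, odd k, A = f @: setT &
        induced_copy (compl_adj (cycle_adj k)) adj f].

Definition stable (T : finType) (adj : rel T) (S : {set T}) : bool :=
  [forall x in S, forall y in S, ~~ adj x y].

Definition alpha_ge3 (T : finType) (adj : rel T) : Prop :=
  exists S : {set T}, stable adj S && (#|S| == 3).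

Definition cotriangle (T : finType) (adj : rel T) (x y z : T) : bool :=
  [&& x != y, y != z, x != z, ~~ adj x y, ~~ adj y z & ~~ adj x z].

Definition component (T : finType) (e : rel T) (O : {set T}) : Prop :=
  exists x : T, O = [set y | connect e x y].

Definition triangle_free_on (T : finType) (e : rel T) (O : {set T}) : Prop :=
  forall x y z, x \in O -> y \in O -> z \in O ->
    ~~ [&& e x y, e y z & e x z].

(* Main.v *)
Require Import Defs.
From mathcomp Require Import all_boot zify.
Set Implicit Arguments. Unset Strict Implicit.

Record Setting (T : finType) (H : rel T) (c : nat -> T) : Prop := {
  s_sym : symmetric H;
  s_cb : forall t a b u w, H t a -> H t b -> H a b -> H u t -> ~~ H u a -> ~~ H u b ->
         H w u -> ~~ H w t -> ~~ H w a -> ~~ H w b -> False;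
  s_c5 : forall v0 v1 v2 v3 v4, H v0 v1 -> H v1 v2 -> H v2 v3 -> H v3 v4 -> H v4 v0 ->
         ~~ H v0 v2 -> ~~ H v0 v3 -> ~~ H v1 v3 -> ~~ H v1 v4 -> ~~ H v2 v4 -> False;
  s_C1 : forall m p, p = m + 1 -> H (c m) (c p);
  s_C2 : forall m p, p = m + 2 -> ~~ H (c m) (c p);
  s_C3 : forall m p, p = m + 3 -> ~~ H (c m) (c p);
  s_odd : forall m, exists j, c (m + 2 * j) = c (m + 1);
  s_F4 : forall m p z, H (c m) (c p) -> H (c m) z -> H (c p) z -> False }.

Section G.
Lemma R3 (T : finType) (H : rel T) c (S : Setting H c) a n :
  H a (c n) -> H a (c (n+3)) -> False.
Proof.
case: S => sym cb c5 C1 C2 C3 odd F4 h0 h3.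
have n1 : ~~ H a (c (n+1)).
  apply/negP=> h1; apply: (F4 n (n+1) a); [apply: C1; lia | by rewrite sym | by rewrite sym].
have n2 : ~~ H a (c (n+2)).
  apply/negP=> h1; apply: (F4 (n+2) (n+3) a); [apply: C1; lia | by rewrite sym | by rewrite sym].
apply: (c5 a (c n) (c (n+1)) (c (n+2)) (c (n+3))) => //.
- by apply: C1; lia.
- by apply: C1; lia.
- by apply: C1; lia.
- by rewrite sym.
- by apply: C2; lia.
- by apply: C3; lia.
- by apply: C2; lia.
Qed.

Lemma S1 (T : finType) (H : rel T) c (S : Setting H c) i a b :
  H (c i) a -> H (c i) b -> H a b -> H (c (i+2)) a -> H (c (i+2)) b.
Proof.
move=> ha hb hab h2a; apply/idPn => nb.
have S' := S; case: S' => sym cb c5 C1 C2 C3 odd F4.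
apply: (cb a b (c i) (c (i+2)) (c (i+3))) => //.
- by rewrite sym.
- by rewrite sym.
- by rewrite sym; apply: C2; lia.
- by rewrite sym; apply: C1; lia.
- apply/negP=> h; apply: (F4 (i+2) (i+3) a) => //; first by apply: C1; lia.
- apply/negP=> h; apply: (R3 S (a := b) (n := i)); by rewrite sym.
- by rewrite sym; apply: C3; lia.
Qed.

Lemma step1 (T : finType) (H : rel T) c (S : Setting H c) n a b :
  H (c n) a -> H (c n) b -> H a b -> False.
Proof.
move=> ha hb hab.
have S' := S; case: S' => sym cb c5 C1 C2 C3 odd F4.
have cl : forall j, H (c (n + 2 * j)) a && H (c (n + 2 * j)) b.
  elim=> [|j /andP [hia hib]]; first by rewrite muln0 addn0 ha hb.
  have -> : n + 2 * j.+1 = n + 2 * j + 2 by lia.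
  set i := n + 2 * j in hia hib *.
  have : H (c (i+2)) a || H (c (i+2)) b.
    apply/idPn; rewrite negb_or => /andP [na nb].
    apply: (cb (c i) a b (c (i+1)) (c (i+2))) => //.
    - by rewrite sym; apply: C1; lia.
    - apply/negP => h; apply: (F4 i (i+1) a) => //; by apply: C1; lia.
    - apply/negP => h; apply: (F4 i (i+1) b) => //; by apply: C1; lia.
    - by rewrite sym; apply: C1; lia.
    - by rewrite sym; apply: C2; lia.
  case/orP => h.
    by rewrite h (S1 S hia hib hab h).
  by rewrite h (S1 S hib hia _ h) // sym.
have [j0 ej] := odd n.
have /andP [h1 _] := cl j0; rewrite ej in h1.
by apply: (F4 n (n+1) a) => //; apply: C1; lia.
Qed.

Lemma L2a (T : finType) (H : rel T) c (S : Setting H c) x y z m :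
  H x y -> H x z -> H y z -> H (c m) x -> H (c (m+1)) y || H (c (m+1)) z.
Proof.
move=> hxy hxz hyz hm.
have S' := S; case: S' => sym cb c5 C1 C2 C3 odd F4.
apply/idPn; rewrite negb_or => /andP [ny nz].
apply: (cb x y z (c m) (c (m+1))) => //.
- by apply/negP => h; apply: (step1 S hm h hxy).
- by apply/negP => h; apply: (step1 S hm h hxz).
- by rewrite sym; apply: C1; lia.
- apply/negP => h; apply: (F4 m (m+1) x) => //; by apply: C1; lia.
Qed.

Lemma L2b (T : finType) (H : rel T) c (S : Setting H c) x y m :
  H x y -> H (c m) x -> H (c (m+2)) y -> False.
Proof.
move=> hxy hm h2.
have S' := S; case: S' => sym cb c5 C1 C2 C3 odd F4.
apply: (c5 x (c m) (c (m+1)) (c (m+2)) y) => //.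
- by rewrite sym.
- by apply: C1; lia.
- by apply: C1; lia.
- by rewrite sym.
- apply/negP => h; apply: (F4 m (m+1) x) => //; first (by apply: C1; lia); by rewrite sym.
- apply/negP => h; apply: (step1 S (n := m+2) (a := x) (b := y)) => //; by rewrite sym.
- by apply: C2; lia.
- by apply/negP => h; apply: (step1 S hm h hxy).
- apply/negP => h; apply: (F4 (m+1) (m+2) y) => //; by apply: C1; lia.
Qed.

Lemma step2 (T : finType) (H : rel T) c (S : Setting H c) t a b n :
  H t a -> H t b -> H a b -> H (c n) t -> False.
Proof.
move=> hta htb hab hn.
have S' := S; case: S' => sym cb c5 C1 C2 C3 odd F4.
have cl : forall j, H (c (n + 2 * j)) t.
  elim=> [|j hi]; first by rewrite muln0 addn0.
  have -> : n + 2 * j.+1 = n + 2 * j + 2 by lia.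
  set i := n + 2 * j in hi *.
  have e : i + 1 + 1 = i + 2 by lia.
  case/orP: (L2a S hta htb hab hi) => h1.
    have := L2a S (x := a) (y := t) (z := b) (m := i + 1); rewrite e sym => /(_ hta hab htb h1).
    by case/orP => // h2; case: (L2b S htb hi h2).
  have := L2a S (x := b) (y := t) (z := a) (m := i + 1); rewrite e sym => /(_ htb _ hta h1).
  rewrite sym => /(_ hab).
  by case/orP => // h2; case: (L2b S hta hi h2).
have [j0 ej] := odd n.
have h1 := cl j0; rewrite ej in h1.
by apply: (F4 n (n+1) t) => //; apply: C1; lia.
Qed.

Fixpoint reach (T : finType) (H : rel T) (c : nat -> T) (n : nat) (v : T) : Prop :=
  match n with
  | 0 => exists m, v = c m
  | n.+1 => reach H c n v \/ exists u, reach H c n u /\ H u v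
  end.

Lemma notri (T : finType) (H : rel T) c (S : Setting H c) n :
  forall v x y, reach H c n v -> H v x -> H v y -> H x y -> False.
Proof.
have S' := S; case: S' => sym cb c5 C1 C2 C3 odd F4.
elim: n => [|n IH] v x y /=.
  by case=> m ->; exact: (step1 S).
case=> [rv|[u [ru hut]]]; first exact: IH.
move=> ha hb hab.
have nua : ~~ H u x by apply/negP => h; apply: (IH u v x ru hut h ha).
have nub : ~~ H u y by apply/negP => h; apply: (IH u v y ru hut h hb).
move: IH ru; case: n => [|n] IH /= ru.
  by case: ru => m eu; subst u; apply: (step2 S ha hb hab hut).
case: ru => [ru'|[w [rw hwu]]].
  by apply: (IH v x y _ ha hb hab); right; exists u.
have nwv : ~~ H w v.
  by apply/negP => h; apply: (IH v x y _ ha hb hab); right; exists w.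
have nwx : ~~ H w x.
  apply/negP => h; apply: (IH x v y _ _ hab hb); [by right; exists w | by rewrite sym].
have nwy : ~~ H w y.
  apply/negP => h; apply: (IH y v x _ _ _ ha); [by right; exists w | by rewrite sym | by rewrite sym].
exact: (cb v x y u w ha hb hab hut nua nub hwu nwv nwx nwy).
Qed.

Lemma reach_path (T : finType) (H : rel T) c n x p :
  reach H c n x -> path H x p -> reach H c (n + size p) (last x p).
Proof.
elim: p n x => [|z p IH] n x /=; first by rewrite addn0.
move=> rx /andP [hxz hp]; rewrite addnS -addSn; apply: IH hp.
by right; exists x.
Qed.
End G.

Unset Implicit Arguments.
Ltac five i := case: i => [[|[|[|[|[|?]]]]] ?]; last by [].

Theorem lemma2 (T : finType) (adj : rel T) (A : {set T}) :
  simple_graph adj ->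
  ~ contains banner_adj adj ->
  ~ contains (cycle_adj 5) adj ->
  odd_antihole adj A ->
  alpha_ge3 adj ->
  (forall x y z, cotriangle adj x y z ->
     ~ [\/ (x \in A) && (y \in A), (y \in A) && (z \in A) | (x \in A) && (z \in A)]) ->
  exists O : {set T},
    [/\ component (compl_adj adj) O, A \subset O &
        triangle_free_on (compl_adj adj) O].
Proof.
move=> [asym airr] nban nc5 [k [f [k5 kodd eA [finj hf]]]] _ hcot.
set H := compl_adj adj.
have Hsym : symmetric H by move=> x y; rewrite /H /compl_adj eq_sym asym.
have Hirr : irreflexive H by move=> x; rewrite /H /compl_adj eqxx.
have adjE : forall x y, adj x y = (x != y) && ~~ H x y.
  move=> x y; rewrite /H /compl_adj; case: eqP => [->|_] /=; first by rewrite airr.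
  by rewrite negbK.
have cb : forall t a b u w, H t a -> H t b -> H a b -> H u t -> ~~ H u a -> ~~ H u b ->
         H w u -> ~~ H w t -> ~~ H w a -> ~~ H w b -> False.
  move=> t a b u w hta htb hab hut nua nub hwu nwt nwa nwb.
  have e_t_a : H t a = true := hta.
  have e_a_t : H a t = true by rewrite Hsym.
  have e_t_b : H t b = true := htb.
  have e_b_t : H b t = true by rewrite Hsym.
  have e_a_b : H a b = true := hab.
  have e_b_a : H b a = true by rewrite Hsym.
  have e_u_t : H u t = true := hut.
  have e_t_u : H t u = true by rewrite Hsym.
  have e_u_a : H u a = false := negbTE nua.
  have e_a_u : H a u = false by rewrite Hsym; exact: negbTE nua.
  have e_u_b : H u b = false := negbTE nub.
  have e_b_u : H b u = false by rewrite Hsym; exact: negbTE nub.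
  have e_w_u : H w u = true := hwu.
  have e_u_w : H u w = true by rewrite Hsym.
  have e_w_t : H w t = false := negbTE nwt.
  have e_t_w : H t w = false by rewrite Hsym; exact: negbTE nwt.
  have e_w_a : H w a = false := negbTE nwa.
  have e_a_w : H a w = false by rewrite Hsym; exact: negbTE nwa.
  have e_w_b : H w b = false := negbTE nwb.
  have e_b_w : H b w = false by rewrite Hsym; exact: negbTE nwb.
  have d_w_a : (w == a) = false by apply/eqP => E; move: e_a_u; rewrite -E e_w_u.
  have d_a_w : (a == w) = false by rewrite eq_sym.
  have d_w_u : (w == u) = false by apply/eqP => E; move: e_w_t; rewrite E e_u_t.
  have d_u_w : (u == w) = false by rewrite eq_sym.
  have d_w_b : (w == b) = false by apply/eqP => E; move: e_w_a; rewrite E e_b_a.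
  have d_b_w : (b == w) = false by rewrite eq_sym.
  have d_w_t : (w == t) = false by apply/eqP => E; move: e_w_a; rewrite E e_t_a.
  have d_t_w : (t == w) = false by rewrite eq_sym.
  have d_a_u : (a == u) = false by apply/eqP => E; move: e_a_w; rewrite E e_u_w.
  have d_u_a : (u == a) = false by rewrite eq_sym.
  have d_a_b : (a == b) = false by apply/eqP => E; move: e_a_b; rewrite E Hirr.
  have d_b_a : (b == a) = false by rewrite eq_sym.
  have d_a_t : (a == t) = false by apply/eqP => E; move: e_a_u; rewrite E e_t_u.
  have d_t_a : (t == a) = false by rewrite eq_sym.
  have d_u_b : (u == b) = false by apply/eqP => E; move: e_b_w; rewrite -E e_u_w.
  have d_b_u : (b == u) = false by rewrite eq_sym.
  have d_u_t : (u == t) = false by apply/eqP => E; move: e_t_w; rewrite -E e_u_w.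
  have d_t_u : (t == u) = false by rewrite eq_sym.
  have d_b_t : (b == t) = false by apply/eqP => E; move: e_b_u; rewrite E e_t_u.
  have d_t_b : (t == b) = false by rewrite eq_sym.
  apply: nban.
  exists (fun i : 'I_5 => match val i with 0 => w | 1 => a | 2 => u | 3 => b | _ => t end).
  split.
    move=> i j; five i; five j; move=> /= E;
    first [ apply: val_inj; reflexivity | move/eqP: E; rewrite ?e_w_a ?e_w_u ?e_w_b ?e_w_t ?e_a_w ?e_a_u ?e_a_b ?e_a_t ?e_u_w ?e_u_a ?e_u_b ?e_u_t ?e_b_w ?e_b_a ?e_b_u ?e_b_t ?e_t_w ?e_t_a ?e_t_u ?e_t_b ?d_w_a ?d_a_w ?d_w_u ?d_u_w ?d_w_b ?d_b_w ?d_w_t ?d_t_w ?d_a_u ?d_u_a ?d_a_b ?d_b_a ?d_a_t ?d_t_a ?d_u_b ?d_b_u ?d_u_t ?d_t_u ?d_b_t ?d_t_b; done ].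
  move=> i j; five i; five j; rewrite /= adjE ?eqxx ?e_w_a ?e_w_u ?e_w_b ?e_w_t ?e_a_w ?e_a_u ?e_a_b ?e_a_t ?e_u_w ?e_u_a ?e_u_b ?e_u_t ?e_b_w ?e_b_a ?e_b_u ?e_b_t ?e_t_w ?e_t_a ?e_t_u ?e_t_b ?d_w_a ?d_a_w ?d_w_u ?d_u_w ?d_w_b ?d_b_w ?d_w_t ?d_t_w ?d_a_u ?d_u_a ?d_a_b ?d_b_a ?d_a_t ?d_t_a ?d_u_b ?d_b_u ?d_u_t ?d_t_u ?d_b_t ?d_t_b; reflexivity.
have c5 : forall v0 v1 v2 v3 v4, H v0 v1 -> H v1 v2 -> H v2 v3 -> H v3 v4 -> H v4 v0 ->
         ~~ H v0 v2 -> ~~ H v0 v3 -> ~~ H v1 v3 -> ~~ H v1 v4 -> ~~ H v2 v4 -> False.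
  move=> v0 v1 v2 v3 v4 h01 h12 h23 h34 h40 n02 n03 n13 n14 n24.
  have e_v0_v1 : H v0 v1 = true := h01.
  have e_v1_v0 : H v1 v0 = true by rewrite Hsym.
  have e_v1_v2 : H v1 v2 = true := h12.
  have e_v2_v1 : H v2 v1 = true by rewrite Hsym.
  have e_v2_v3 : H v2 v3 = true := h23.
  have e_v3_v2 : H v3 v2 = true by rewrite Hsym.
  have e_v3_v4 : H v3 v4 = true := h34.
  have e_v4_v3 : H v4 v3 = true by rewrite Hsym.
  have e_v4_v0 : H v4 v0 = true := h40.
  have e_v0_v4 : H v0 v4 = true by rewrite Hsym.
  have e_v0_v2 : H v0 v2 = false := negbTE n02.
  have e_v2_v0 : H v2 v0 = false by rewrite Hsym; exact: negbTE n02.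
  have e_v0_v3 : H v0 v3 = false := negbTE n03.
  have e_v3_v0 : H v3 v0 = false by rewrite Hsym; exact: negbTE n03.
  have e_v1_v3 : H v1 v3 = false := negbTE n13.
  have e_v3_v1 : H v3 v1 = false by rewrite Hsym; exact: negbTE n13.
  have e_v1_v4 : H v1 v4 = false := negbTE n14.
  have e_v4_v1 : H v4 v1 = false by rewrite Hsym; exact: negbTE n14.
  have e_v2_v4 : H v2 v4 = false := negbTE n24.
  have e_v4_v2 : H v4 v2 = false by rewrite Hsym; exact: negbTE n24.
  have d_v0_v1 : (v0 == v1) = false by apply/eqP => E; move: e_v0_v2; rewrite E e_v1_v2.
  have d_v1_v0 : (v1 == v0) = false by rewrite eq_sym.
  have d_v0_v2 : (v0 == v2) = false by apply/eqP => E; move: e_v0_v3; rewrite E e_v2_v3.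
  have d_v2_v0 : (v2 == v0) = false by rewrite eq_sym.
  have d_v0_v3 : (v0 == v3) = false by apply/eqP => E; move: e_v3_v1; rewrite -E e_v0_v1.
  have d_v3_v0 : (v3 == v0) = false by rewrite eq_sym.
  have d_v0_v4 : (v0 == v4) = false by apply/eqP => E; move: e_v4_v1; rewrite -E e_v0_v1.
  have d_v4_v0 : (v4 == v0) = false by rewrite eq_sym.
  have d_v1_v2 : (v1 == v2) = false by apply/eqP => E; move: e_v2_v0; rewrite -E e_v1_v0.
  have d_v2_v1 : (v2 == v1) = false by rewrite eq_sym.
  have d_v1_v3 : (v1 == v3) = false by apply/eqP => E; move: e_v3_v0; rewrite -E e_v1_v0.
  have d_v3_v1 : (v3 == v1) = false by rewrite eq_sym.
  have d_v1_v4 : (v1 == v4) = false by apply/eqP => E; move: e_v4_v2; rewrite -E e_v1_v2.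
  have d_v4_v1 : (v4 == v1) = false by rewrite eq_sym.
  have d_v2_v3 : (v2 == v3) = false by apply/eqP => E; move: e_v3_v1; rewrite -E e_v2_v1.
  have d_v3_v2 : (v3 == v2) = false by rewrite eq_sym.
  have d_v2_v4 : (v2 == v4) = false by apply/eqP => E; move: e_v2_v0; rewrite E e_v4_v0.
  have d_v4_v2 : (v4 == v2) = false by rewrite eq_sym.
  have d_v3_v4 : (v3 == v4) = false by apply/eqP => E; move: e_v3_v0; rewrite E e_v4_v0.
  have d_v4_v3 : (v4 == v3) = false by rewrite eq_sym.
  apply: nc5.
  exists (fun i : 'I_5 => match val i with 0 => v0 | 1 => v2 | 2 => v4 | 3 => v1 | _ => v3 end).
  split.
    move=> i j; five i; five j; move=> /= E;
    first [ apply: val_inj; reflexivity | move/eqP: E; rewrite ?e_v0_v1 ?e_v0_v2 ?e_v0_v3 ?e_v0_v4 ?e_v1_v0 ?e_v1_v2 ?e_v1_v3 ?e_v1_v4 ?e_v2_v0 ?e_v2_v1 ?e_v2_v3 ?e_v2_v4 ?e_v3_v0 ?e_v3_v1 ?e_v3_v2 ?e_v3_v4 ?e_v4_v0 ?e_v4_v1 ?e_v4_v2 ?e_v4_v3 ?d_v0_v1 ?d_v1_v0 ?d_v0_v2 ?d_v2_v0 ?d_v0_v3 ?d_v3_v0 ?d_v0_v4 ?d_v4_v0 ?d_v1_v2 ?d_v2_v1 ?d_v1_v3 ?d_v3_v1 ?d_v1_v4 ?d_v4_v1 ?d_v2_v3 ?d_v3_v2 ?d_v2_v4 ?d_v4_v2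 ?d_v3_v4 ?d_v4_v3; done ].
  move=> i j; five i; five j; rewrite /= adjE ?eqxx ?e_v0_v1 ?e_v0_v2 ?e_v0_v3 ?e_v0_v4 ?e_v1_v0 ?e_v1_v2 ?e_v1_v3 ?e_v1_v4 ?e_v2_v0 ?e_v2_v1 ?e_v2_v3 ?e_v2_v4 ?e_v3_v0 ?e_v3_v1 ?e_v3_v2 ?e_v3_v4 ?e_v4_v0 ?e_v4_v1 ?e_v4_v2 ?e_v4_v3 ?d_v0_v1 ?d_v1_v0 ?d_v0_v2 ?d_v2_v0 ?d_v0_v3 ?d_v3_v0 ?d_v0_v4 ?d_v4_v0 ?d_v1_v2 ?d_v2_v1 ?d_v1_v3 ?d_v3_v1 ?d_v1_v4 ?d_v4_v1 ?d_v2_v3 ?d_v3_v2 ?d_v2_v4 ?d_v4_v2 ?d_v3_v4 ?d_v4_v3; reflexivity.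

have kpos : 0 < k by lia.
pose c := fun m => f (Ordinal (ltn_pmod m kpos)).
have HfE : forall i j : 'I_k, H (f i) (f j) = cycle_adj k i j.
  move=> i j; rewrite /H /compl_adj hf (inj_eq finj) /compl_adj.
  case: eqVneq => [->|ne] /=; last by rewrite negbK.
  rewrite /cycle_adj orbb; apply/esym/eqP => E.
  have := ltn_ord j; case: (ltnP j.+1 k) => h1 h2.
    by move: E; rewrite modn_small //; lia.
  have ek : j.+1 = k by lia.
  by move: E; rewrite ek modnn; lia.
have modS : forall m, (m %% k).+1 %% k = (m + 1) %% k by move=> m; rewrite -addn1 modnDml.
have HcE : forall m p, H (c m) (c p) = (p %% k == (m + 1) %% k) || (m %% k == (p + 1) %% k).
  by move=> m p; rewrite /c HfE /cycle_adj /= !modS.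
have neqmod : forall m a b, a < b -> b - a < k -> ((m + b) %% k == (m + a) %% k) = false.
  move=> m a b ab bk; have -> : m + b = (m + a) + (b - a) by lia.
  rewrite -{2}(addn0 (m + a)) eqn_modDl mod0n modn_small //; lia.
have cA : forall m, c m \in A by move=> m; rewrite eA; apply: imset_f; rewrite inE.
have Hneq : forall x y, H x y -> x != y by move=> x y /andP [].
have Hna : forall x y, H x y -> ~~ adj x y by move=> x y /andP [].
have S : Setting H c.
  split => //.
  - by move=> m p ->; rewrite HcE eqxx.
  - move=> m p ->; rewrite HcE (_ : m + 2 + 1 = m + 3) ?neqmod //; try lia.
    by rewrite -{1}(addn0 m) eq_sym neqmod //; lia.
  - move=> m p ->; rewrite HcE (_ : m + 3 + 1 = m + 4) ?neqmod //; try lia.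
    by rewrite -{1}(addn0 m) eq_sym neqmod //; lia.
  - move=> m; exists k./2.+1.
    have e2 : 2 * k./2.+1 = k.+1.
      by have := odd_double_half k; rewrite kodd -muln2 /=; lia.
    rewrite /c e2; congr f; apply: val_inj => /=.
    by rewrite (_ : m + k.+1 = (m + 1) + k) ?modnDr //; lia.
  - move=> m p z h1 h2 h3; apply: (hcot (c m) (c p) z); last by apply: Or31; rewrite !cA.
    by rewrite /cotriangle (Hneq _ _ h1) (Hneq _ _ h3) (Hneq _ _ h2) (Hna _ _ h1) (Hna _ _ h3) (Hna _ _ h2).
exists [set y | connect H (c 0) y]; split.
- by exists (c 0).
- apply/subsetP => x; rewrite eA => /imsetP [i _ ->]; rewrite inE.
  have -> : f i = c i by rewrite /c; congr f; apply: val_inj => /=; rewrite modn_small.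
  elim: (nat_of_ord i) => [|m IHm]; first exact: connect0.
  apply: connect_trans IHm _; apply: connect1; rewrite -addn1.
  by case: S => _ _ _ C1 _ _ _ _; apply: C1.
- move=> x y z; rewrite inE => /connectP [p hp ->] _ _.
  have rx := reach_path (n := 0) (x := c 0) (ex_intro _ 0 erefl) hp.
  apply/negP => /and3P [hxy hyz hxz].
  exact: (notri S rx hxy hxz hyz).
Qed.
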